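(* Let $\sigma$ be a strongly convex rational polyhedral cone with $\operatorname{ns}(\sigma)>0$. Then there is a unique face $\tau$ of $\sigma$ which is minimal (with respect to inclusion) among the faces $\tau'$ of $\sigma$ satisfying $\operatorname{ns}(\tau')=\operatorname{ns}(\sigma)$.
   Context: For a strongly convex rational polyhedral cone $\sigma\subset\mathbb{R}^n$, $\sigma(1)$ denotes its set of rays (one-dimensional faces) and $\dim\sigma$ the dimension of the linear subspace spanned by $\sigma$. The non-simplicial index of $\sigma$ is $\operatorname{ns}(\sigma)=|\sigma(1)|-\dim\sigma$; thus $\sigma$ is simplicial iff $\operatorname{ns}(\sigma)=0$. *)

(* Defs.v *)
(* Cones live in R^n, modelled as row vectors 'rV[R]_n over an
   arbitrary real field R (the paper's case is R = the reals). *)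
From HB Require Import structures.
From mathcomp Require Import all_boot all_order all_algebra.
Set Implicit Arguments. Unset Strict Implicit. Unset Printing Implicit Defensive.
Import Order.TTheory GRing.Theory Num.Theory.
Local Open Scope ring_scope.

Section Cones.
Variables (R : realFieldType) (n : nat).
Local Notation vec := 'rV[R]_n.

Definition vset := vec -> Prop.
Definition vseteq (A B : vset) : Prop := forall v, A v <-> B v.
Definition vsubset (A B : vset) : Prop := forall v, A v -> B v.

Definition dotv (u v : vec) : R := \sum_(j < n) u 0 j * v 0 j.

Definition in_cone (S : seq vec) (v : vec) : Prop :=
  exists c : 'I_(size S) -> R,
    (forall i, 0 <= c i) /\ v = \sum_(i < size S) c i *: S`_i.

Definition rational_vec (v : vec) : Prop :=
  exists q : 'rV[rat]_n, v = map_mx (fun x => ratr x) q.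

Definition rational_polyhedral (C : vset) : Prop :=
  exists S : seq vec, (forall i, (i < size S)%N -> rational_vec S`_i) /\
    vseteq C (in_cone S).

Definition strongly_convex (C : vset) : Prop :=
  forall v, C v -> C (- v) -> v = 0.

Definition is_face (C T : vset) : Prop :=
  exists u : vec, (forall v, C v -> 0 <= dotv u v) /\
    vseteq T (fun v => C v /\ dotv u v = 0).

Definition has_dim (T : vset) (d : nat) : Prop :=
  (exists M : 'M[R]_(d, n), row_free M /\ forall i, T (row i M)) /\
  (forall k (M : 'M[R]_(k, n)), row_free M -> (forall i, T (row i M)) -> (k <= d)%N).

Definition is_ray (C T : vset) : Prop := is_face C T /\ has_dim T 1.

Definition num_rays (C : vset) (k : nat) : Prop :=
  exists f : 'I_k -> vset,
    (forall i, is_ray C (f i)) /\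
    (forall i j, vseteq (f i) (f j) -> i = j) /\
    (forall T, is_ray C T -> exists i, vseteq T (f i)).

Definition ns_is (C : vset) (m : nat) : Prop :=
  exists k d, num_rays C k /\ has_dim C d /\ k = (d + m)%N.

End Cones.

(* Main.v *)
Require Import Defs.
From HB Require Import structures.
From mathcomp Require Import all_boot all_order all_algebra.
From Stdlib Require Import ClassicalEpsilon Lia.
Import Order.TTheory GRing.Theory Num.Theory.
Set Implicit Arguments. Unset Strict Implicit. Unset Printing Implicit Defensive.
Local Open Scope ring_scope.



Definition bP (P : Prop) : bool := if excluded_middle_informative P then true else false.
Lemma bPP (P : Prop) : reflect P (bP P).
Proof. rewrite /bP; case: excluded_middle_informative => H; by constructor. Qed.

Section Dot.
Variables (R : realFieldType) (n : nat).
Local Notation vec := 'rV[R]_n.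
Local Notation dotv := (@dotv R n).

Lemma dotvDr u v w : dotv u (v + w) = dotv u v + dotv u w.
Proof. rewrite /Defs.dotv -big_split; apply: eq_bigr => j _; by rewrite mxE mulrDr. Qed.
Lemma dotvDl u v w : dotv (v + w) u = dotv v u + dotv w u.
Proof. rewrite /Defs.dotv -big_split; apply: eq_bigr => j _; by rewrite mxE mulrDl. Qed.
Lemma dotvZr u a v : dotv u (a *: v) = a * dotv u v.
Proof. rewrite /Defs.dotv mulr_sumr; apply: eq_bigr => j _; by rewrite mxE mulrCA. Qed.
Lemma dotvZl u a v : dotv (a *: v) u = a * dotv v u.
Proof. rewrite /Defs.dotv mulr_sumr; apply: eq_bigr => j _; by rewrite mxE mulrA. Qed.
Lemma dotvNr u v : dotv u (- v) = - dotv u v.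
Proof. by rewrite -scaleN1r dotvZr mulN1r. Qed.
Lemma dotvNl u v : dotv (- v) u = - dotv v u.
Proof. by rewrite -scaleN1r dotvZl mulN1r. Qed.
Lemma dotvBr u v w : dotv u (v - w) = dotv u v - dotv u w.
Proof. by rewrite dotvDr dotvNr. Qed.
Lemma dotvBl u v w : dotv (v - w) u = dotv v u - dotv w u.
Proof. by rewrite dotvDl dotvNl. Qed.
Lemma dotv0r u : dotv u 0 = 0.
Proof. by rewrite -(scale0r 0) dotvZr mul0r. Qed.
Lemma dotv0l u : dotv 0 u = 0.
Proof. by rewrite -(scale0r 0) dotvZl mul0r. Qed.
Lemma dotv_sumr (I : finType) (P : pred I) u (F : I -> vec) :
  dotv u (\sum_(i | P i) F i) = \sum_(i | P i) dotv u (F i).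
Proof.
elim/big_rec2: _ => [|i y1 y2 _ <-]; first exact: dotv0r.
by rewrite dotvDr.
Qed.
Lemma dotvC u v : dotv u v = dotv v u.
Proof. rewrite /Defs.dotv; apply: eq_bigr => j _; exact: mulrC. Qed.
Lemma msg0 (x : R) : 0 <= x * x.
Proof. by rewrite -expr2 sqr_ge0. Qed.
Lemma dotv_self_gt0 v : v != 0 -> 0 < dotv v v.
Proof.
move=> nz; rewrite lt_def sumr_ge0 ?andbT; last by move=> j _; rewrite msg0.
apply: contra nz => /eqP H; apply/eqP/rowP => j; rewrite mxE.
have := psumr_eq0P (fun j _ => msg0 (v 0 j)) H (isT : true).
move/(_ j) => /eqP; by rewrite mulf_eq0 orbb => /eqP.
Qed.

Lemma exists_above (k : nat) (f : 'I_k -> R) : exists t, forall i, f i < t.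
Proof.
exists (1 + \sum_i `|f i|) => i.
apply: (le_lt_trans (ler_norm _)).
rewrite (bigD1 i) //= addrCA ltrDl; apply: (lt_le_trans ltr01).
by rewrite lerDl sumr_ge0.
Qed.

Lemma exists_between (k : nat) (f : 'I_k -> R) U :
  (forall i, f i < U) -> exists t, t < U /\ forall i, f i < t.
Proof.
elim: k f => [|k IH] f H.
  exists (U - 1); split; [by rewrite ltrBlDr ltrDl ltr01 | by case].
have [t [tU Ht]] := IH (fun i => f (lift ord0 i)) (fun i => H _).
exists (Num.max t ((f ord0 + U) / 2)); split.
  rewrite gt_max tU /= ltr_pdivrMr // mulrDr mulr1 ltrD2r; exact: H.
move=> i; rewrite lt_max; case: (unliftP ord0 i) => [j ->|->].
  by rewrite Ht.
apply/orP; right; rewrite ltr_pdivlMr // mulrDr mulr1 ltrD2l; exact: H.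
Qed.

Definition pointedI k (a : 'I_k -> vec) := forall c : 'I_k -> R,
  (forall i, 0 <= c i) -> \sum_i c i *: a i = 0 -> forall i, c i = 0.

Lemma pointedI_nz k (a : 'I_k -> vec) : pointedI a -> forall i, a i != 0.
Proof.
move=> Pa i; apply/negP => /eqP ai0.
have := Pa (fun j => if j == i then 1 else 0).
rewrite (bigD1 i) //= eqxx ai0 scaler0 add0r big1; last first.
  by move=> j /negbTE ->; rewrite scale0r.
have c0 : forall j : 'I_k, 0 <= (if j == i then 1 else 0 : R).
  by move=> j; case: (j == i).
move=> /(_ c0 erefl i); rewrite eqxx => H; have := @oner_neq0 R.
by rewrite H eqxx.
Qed.

Lemma ext_sum k (c0 : R) (c : 'I_k -> R) (a : 'I_k.+1 -> vec) :
  \sum_i (if unlift ord0 i is Some j then c j else c0) *: a i =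
  c0 *: a ord0 + \sum_j c j *: a (lift ord0 j).
Proof.
rewrite big_ord_recl unlift_none; congr (_ + _); apply: eq_bigr => j _.
by rewrite liftK.
Qed.

Lemma gordan k (a : 'I_k -> vec) : pointedI a -> exists u, forall i, 0 < dotv u (a i).
Proof.
elim: k a => [|k IH] a Pa; first by exists 0; case.
case: k IH a Pa => [|k] IH a Pa.
  exists (a ord0) => i; have -> : i = ord0 by apply: ord1.
  apply: dotv_self_gt0; exact: pointedI_nz.
set x := a ord0; set b := fun j => a (lift ord0 j).
have Pb : pointedI b.
  move=> c c0 Hc j.
  pose c' i := if unlift ord0 i is Some j then c j else 0.
  have := Pa c'; rewrite /c' ext_sum scale0r add0r.
  move=> /(_ _ Hc (lift ord0 j)); rewrite liftK; apply.
  by move=> i; case: unlift.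
have [u Hu] := IH b Pb.
have [ux|] := ltP 0 (dotv u x).
  by exists u => i; case: (unliftP ord0 i) => [j ->|->]; [exact: Hu|].
move=> Hux.
set al := - dotv u x.
have al0 : 0 <= al by rewrite /al oppr_ge0.
pose c j := al *: b j + dotv u (b j) *: x.
have Pc : pointedI c.
  move=> mu mu0 Hmu.
  pose c' i := if unlift ord0 i is Some j then al * mu j else \sum_j mu j * dotv u (b j).
  have := Pa c'; rewrite /c' ext_sum.
  have E : (\sum_j mu j * dotv u (b j)) *: x + \sum_(i < k.+1) (al * mu i) *: a (lift ord0 i) = 0.
    rewrite -[X in _ = X]Hmu; under [RHS]eq_bigr do rewrite /c scalerDr.
    rewrite big_split /= addrC; congr (_ + _).
      rewrite scaler_suml; apply: eq_bigr => j _; by rewrite !scalerA.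
    by apply: eq_bigr => j _; rewrite !scalerA mulrC.
  have c'0 : forall i, 0 <= c' i.
    by move=> i; rewrite /c'; case: unlift => [j|]; [rewrite mulr_ge0 | rewrite sumr_ge0 // => j _; rewrite mulr_ge0 // ltW].
  move=> /(_ c'0 E ord0); rewrite unlift_none => H0.
  move=> j; have := psumr_eq0P (fun j (_ : true) => mulr_ge0 (mu0 j) (ltW (Hu j))).
  move=> /(_ H0) /(_ j isT) /eqP; rewrite mulf_eq0 => /orP[/eqP //|].
  by rewrite gt_eqF.
have [v Hv] := IH c Pc.
have Hvc j : 0 < al * dotv v (b j) + dotv u (b j) * dotv v x.
  by have := Hv j; rewrite /c dotvDr !dotvZr.
pose l j := - dotv v (b j) / dotv u (b j).
have lt_l t j : l j < t -> 0 < dotv (v + t *: u) (b j).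
  rewrite /l ltr_pdivrMr // => H; rewrite dotvDl dotvZl -subr_gt0 in H *.
  by rewrite opprK addrC in H.
have fin w : 0 < dotv w x -> (forall j, 0 < dotv w (b j)) -> exists u, forall i, 0 < dotv u (a i).
  by move=> wx wb; exists w => i; case: (unliftP ord0 i) => [j ->|->]; [exact: wb | exact: wx].
case: (eqVneq al 0) => [al_0|al_n0].
  have vx : 0 < dotv v x.
    by have := Hvc ord0; rewrite al_0 mul0r add0r pmulr_rgt0.
  have [t Ht] := exists_above l.
  apply: (fin (v + t *: u)); last by move=> j; apply: lt_l.
  have ux0 : dotv u x = 0 by apply/eqP; rewrite -oppr_eq0 -/al al_0.
  by rewrite dotvDl dotvZl ux0 mulr0 addr0.
have alp : 0 < al by rewrite lt_def al_n0.
have Hl : forall j, l j < dotv v x / al.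
  move=> j; rewrite /l ltr_pdivrMr // mulrAC ltr_pdivlMr //.
  rewrite -subr_gt0 mulNr opprK; have := Hvc j.
  by move=> H; rewrite addrC [_ * al]mulrC [dotv v x * _]mulrC.
have [t [tU Ht]] := exists_between Hl.
apply: (fin (v + t *: u)); last by move=> j; apply: lt_l.
rewrite dotvDl dotvZl -subr_gt0; rewrite ltr_pdivlMr // in tU.
by rewrite subr0 -[dotv u x]opprK -/al mulrN subr_gt0.
Qed.
Lemma gordanP (I : finType) (D : {pred I}) (a : I -> vec) :
  (forall c : I -> R, (forall i, 0 <= c i) -> \sum_(i in D) c i *: a i = 0 ->
     forall i, i \in D -> c i = 0) ->
  exists u, forall i, i \in D -> 0 < dotv u (a i).
Proof.
move=> PD.
have Pa : pointedI (fun k : 'I_#|D| => a (enum_val k)).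
  move=> c' c'0 Hc k'.
  have Hx0 := enum_valP k'.
  pose c i := c' (enum_rank_in Hx0 i).
  have := PD c (fun i => c'0 _) _ _ Hx0; rewrite /c enum_valK_in; apply.
  rewrite big_enum_val -[RHS]Hc; apply: eq_bigr => k _; by rewrite enum_valK_in.
have [u Hu] := gordan Pa.
exists u => i Hi; have := Hu (enum_rank_in Hi i); by rewrite enum_rankK_in.
Qed.
End Dot.



Section Gen.
Variables (R : realFieldType) (n : nat).
Local Notation vec := 'rV[R]_n.
Implicit Types C T : vset R n.

Lemma vseteq_sym C T : vseteq C T -> vseteq T C.
Proof. by move=> H v; split => /H. Qed.
Lemma vseteq_trans C T U : vseteq C T -> vseteq T U -> vseteq C U.
Proof. by move=> H1 H2 v; split => [/H1 /H2 | /H2 /H1]. Qed.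
Lemma vseteq_refl C : vseteq C C.
Proof. by []. Qed.

Lemma is_face_eqC C C' T : vseteq C C' -> is_face C T -> is_face C' T.
Proof.
move=> E [u [H1 H2]]; exists u; split; first by move=> v /E; apply: H1.
move=> v; rewrite H2; split=> [[/E ? ?]|[/E ? ?]]; by split.
Qed.
Lemma is_face_eqT C T T' : vseteq T T' -> is_face C T -> is_face C T'.
Proof.
move=> E [u [H1 H2]]; exists u; split => // v; rewrite -E; exact: H2.
Qed.
Lemma has_dim_eq T T' d : vseteq T T' -> has_dim T d -> has_dim T' d.
Proof.
move=> E [[M [fM HM]] H2]; split; first by exists M; split => // i; apply/E.
move=> k M' fM' HM'; apply: (H2 k M') => // i; apply/E; exact: HM'.
Qed.
Lemma has_dim_uniq T d1 d2 : has_dim T d1 -> has_dim T d2 -> d1 = d2.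
Proof.
move=> [[M1 [f1 H1]] U1] [[M2 [f2 H2]] U2].
by apply/eqP; rewrite eqn_leq (U2 _ M1) // (U1 _ M2).
Qed.
Lemma is_ray_eqC C C' T : vseteq C C' -> is_ray C T -> is_ray C' T.
Proof. by move=> E [F D]; split => //; apply: is_face_eqC F. Qed.
Lemma num_rays_eqC C C' k : vseteq C C' -> num_rays C k -> num_rays C' k.
Proof.
move=> E [f [H1 [H2 H3]]]; exists f; split; first by move=> i; apply: is_ray_eqC (H1 i).
split => // T HT; apply: H3; apply: is_ray_eqC HT; exact: vseteq_sym.
Qed.
Lemma ns_is_eqC C C' m : vseteq C C' -> ns_is C m -> ns_is C' m.
Proof.
move=> E [k [d [H1 [H2 H3]]]]; exists k, d; split; first exact: num_rays_eqC H1.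
by split => //; apply: has_dim_eq H2.
Qed.
End Gen.

Section Cones.
Variables (R : realFieldType) (n : nat) (S : seq 'rV[R]_n).
Local Notation vec := 'rV[R]_n.
Local Notation N := (size S).
Local Notation dotv := (@dotv R n).

Definition sv (i : 'I_N) : vec := S`_i.
Definition cone (P : {set 'I_N}) : vset R n := fun v =>
  exists c : 'I_N -> R, (forall i, 0 <= c i) /\ v = \sum_(i in P) c i *: sv i.
Definition Pu (u : vec) : {set 'I_N} := [set i | dotv u (sv i) == 0].
Definition ray (x : vec) : vset R n := fun v => exists t, 0 <= t /\ v = t *: x.

Implicit Types X Y : {set 'I_N}.

Lemma cone0 X : cone X 0.
Proof. exists (fun _ => 0); split => //; rewrite big1 // => i _; by rewrite scale0r. Qed.

Lemma coneD X v w : cone X v -> cone X w -> cone X (v + w).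
Proof.
move=> [c [c0 ->]] [d [d0 ->]]; exists (fun i => c i + d i); split.
  by move=> i; rewrite addr_ge0.
by rewrite -big_split; apply: eq_bigr => i _; rewrite scalerDl.
Qed.

Lemma coneZ X t v : 0 <= t -> cone X v -> cone X (t *: v).
Proof.
move=> t0 [c [c0 ->]]; exists (fun i => t * c i); split.
  by move=> i; rewrite mulr_ge0.
by rewrite scaler_sumr; apply: eq_bigr => i _; rewrite scalerA.
Qed.

Lemma cone_gen X i : i \in X -> cone X (sv i).
Proof.
move=> Hi; exists (fun j => if j == i then 1 else 0); split.
  by move=> j; case: (j == i).
rewrite (bigD1 i) //= eqxx scale1r big1 ?addr0 // => j /andP[_ /negbTE ->].
by rewrite scale0r.
Qed.

Lemma cone_sum X (I : finType) (P : pred I) (F : I -> vec) :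
  (forall i, P i -> cone X (F i)) -> cone X (\sum_(i | P i) F i).
Proof.
move=> H; elim/big_rec: _ => [|i x Pi Hx]; first exact: cone0.
by apply: coneD => //; apply: H.
Qed.

Lemma cone_trans X Y v : (forall i, i \in X -> cone Y (sv i)) -> cone X v -> cone Y v.
Proof.
move=> H [c [c0 ->]]; apply: cone_sum => i Hi; apply: coneZ => //; exact: H.
Qed.

Lemma cone_subset X Y v : X \subset Y -> cone X v -> cone Y v.
Proof. move=> /subsetP H; apply: cone_trans => i /H; exact: cone_gen. Qed.

Lemma cone_dot_ge0 X u v : (forall i, i \in X -> 0 <= dotv u (sv i)) -> cone X v -> 0 <= dotv u v.
Proof.
move=> H [c [c0 ->]]; rewrite dotv_sumr sumr_ge0 // => i Hi.
by rewrite dotvZr mulr_ge0 // H.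
Qed.

Lemma cone_face X u : (forall i, i \in X -> 0 <= dotv u (sv i)) ->
  vseteq (fun v => cone X v /\ dotv u v = 0) (cone (X :&: Pu u)).
Proof.
move=> H v; split.
  move=> [[c [c0 Ev]] Hu]; exists c; split => //.
  have Ht : forall i, i \in X -> 0 <= c i * dotv u (sv i) by move=> i Hi; rewrite mulr_ge0 // H.
  have Hs : \sum_(i in X) c i * dotv u (sv i) = 0.
    by rewrite -[RHS]Hu Ev dotv_sumr; apply: eq_bigr => i _; rewrite dotvZr.
  have Z := psumr_eq0P Ht Hs.
  rewrite Ev (bigID (fun i => i \in Pu u)) /= [X in _ + X]big1 ?addr0.
    by apply: eq_bigl => i; rewrite in_setI.
  move=> i /andP[Hi]; rewrite inE => /negbTE Hn.
  have /eqP := Z i Hi; rewrite mulf_eq0 Hn orbF => /eqP ->; by rewrite scale0r.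
move=> Hv; split; first by apply: cone_subset Hv; exact: subsetIl.
move: Hv => [c [c0 ->]]; rewrite dotv_sumr big1 // => i; rewrite in_setI inE => /andP[_ /eqP E].
by rewrite dotvZr E mulr0.
Qed.

Lemma cone_setT : vseteq (in_cone S) (cone setT).
Proof.
move=> v; split => [[c [c0 ->]]|[c [c0 ->]]]; exists c; split => //;
  by apply: eq_bigl => i; rewrite in_setT.
Qed.

Lemma cone_Pu_dot u v : cone (Pu u) v -> dotv u v = 0.
Proof.
move=> [c [c0 ->]]; rewrite dotv_sumr big1 // => i; rewrite inE => /eqP E.
by rewrite dotvZr E mulr0.
Qed.

Lemma ray_cone1 i : vseteq (ray (sv i)) (cone [set i]).
Proof.
move=> v; split.
  move=> [t [t0 ->]]; apply: coneZ => //; apply: cone_gen; exact: set11.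
by move=> [c [c0 ->]]; rewrite big_set1; exists (c i).
Qed.

Lemma ray_scale t x : 0 < t -> vseteq (ray (t *: x)) (ray x).
Proof.
move=> tp v; split => [[a [a0 ->]]|[a [a0 ->]]].
  by exists (a * t); rewrite scalerA mulr_ge0 // ltW.
exists (a / t); rewrite scalerA mulrVK ?unitfE ?gt_eqF //; split => //.
by rewrite divr_ge0 // ltW.
Qed.


Definition gm X : 'M[R]_(N, n) := \matrix_i (if i \in X then sv i else 0).

Lemma gm_row X i : row i (gm X) = if i \in X then sv i else 0.
Proof. by rewrite rowK. Qed.

Lemma sv_sub_gm X i : i \in X -> (sv i <= gm X)%MS.
Proof. by move=> Hi; have := row_sub i (gm X); rewrite gm_row Hi. Qed.

Lemma cone_sub_gm X v : cone X v -> (v <= gm X)%MS.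
Proof.
move=> [c [c0 ->]]; apply: summx_sub => i Hi; apply: scalemx_sub; exact: sv_sub_gm.
Qed.

Lemma gm_subP X m2 (B : 'M[R]_(m2, n)) : (forall i, i \in X -> (sv i <= B)%MS) -> (gm X <= B)%MS.
Proof.
move=> H; apply/row_subP => i; rewrite gm_row; case: ifP => Hi; last exact: sub0mx.
exact: H.
Qed.

Lemma gmS X Y : X \subset Y -> (gm X <= gm Y)%MS.
Proof. move=> /subsetP H; apply: gm_subP => i /H; exact: sv_sub_gm. Qed.

Lemma has_dim_cone X : has_dim (cone X) (\rank (gm X)).
Proof.
split.
  exists (rowsub (maxrankfun (gm X)) (gm X)); split; first exact: maxrowsub_free.
  move=> i; rewrite row_rowsub gm_row; case: ifP => Hi; [exact: cone_gen | exact: cone0].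
move=> k M fM HM; rewrite -(eqP fM); apply: mxrankS; apply/row_subP => i.
exact: cone_sub_gm.
Qed.

Lemma rank_gm_card X : (\rank (gm X) <= #|X|)%N.
Proof.
apply: (leq_trans _ (rank_leq_row (rowsub (fun k : 'I_#|X| => enum_val k) (gm X)))).
apply: mxrankS; apply/row_subP => i; rewrite gm_row; case: ifP => Hi; last exact: sub0mx.
have := row_sub (enum_rank_in Hi i) (rowsub (fun k : 'I_#|X| => enum_val k) (gm X)).
by rewrite row_rowsub enum_rankK_in // gm_row Hi.
Qed.

Lemma gm_submod X Y : (\rank (gm (X :|: Y)) + \rank (gm (X :&: Y)) <= \rank (gm X) + \rank (gm Y))%N.
Proof.
apply: (leq_trans _ (eq_leq (mxrank_sum_cap (gm X) (gm Y)))).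
apply: leq_add; apply: mxrankS.
  apply: gm_subP => i; rewrite in_setU => /orP[Hi|Hi].
    exact: submx_trans (sv_sub_gm Hi) (addsmxSl _ _).
  exact: submx_trans (sv_sub_gm Hi) (addsmxSr _ _).
by rewrite sub_capmx !gmS // ?subsetIl ?subsetIr.
Qed.

Lemma gm_mono X Y : X \subset Y -> (\rank (gm Y) <= \rank (gm X) + #|Y :\: X|)%N.
Proof.
move=> sXY; have := gm_submod X (Y :\: X).
have -> : X :|: (Y :\: X) = Y by rewrite setDE setUIr setUCr setIT; apply/setUidPr.
move=> H; apply: (leq_trans (leq_trans (leq_addr _ _) H)).
by rewrite leq_add2l rank_gm_card.
Qed.

End Cones.



Section Rays.
Variables (R : realFieldType) (n : nat) (S : seq 'rV[R]_n).
Local Notation vec := 'rV[R]_n.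
Local Notation N := (size S).
Local Notation dotv := (@dotv R n).
Local Notation s := (@sv _ _ S).
Local Notation C := (@cone _ _ S).
Local Notation Pu := (@Pu _ _ S).
Local Notation gm := (@gm _ _ S).
Hypothesis SC : strongly_convex (C setT).

Definition pospar (x y : vec) := exists t, 0 < t /\ x = t *: y.
Definition rayix (X : {set 'I_N}) i := [&& i \in X, s i != 0 & bP (is_face (C X) (ray (s i)))].
Definition canon (i : 'I_N) := [forall j : 'I_N, (j < i)%N ==> ~~ bP (pospar (s j) (s i))].
Definition AX (X : {set 'I_N}) := [set i | rayix X i && canon i].
Definition du (u : vec) := forall i, 0 <= dotv u (s i).

Lemma sv_mult_ge0 i j a : s j = a *: s i -> s i != 0 -> 0 <= a.
Proof.
move=> E nz; case: (leP 0 a) => // a0; exfalso; move/negP: nz; apply; apply/eqP.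
apply: SC; first by apply: cone_gen; rewrite in_setT.
have -> : - s i = (- a^-1) *: s j.
  by rewrite E scalerA mulNr mulVf ?lt_eqF // scaleN1r.
by apply: coneZ; [rewrite oppr_ge0 invr_le0 ltW | apply: cone_gen; rewrite in_setT].
Qed.

Lemma canon_rep u j : rayix (Pu u) j ->
  exists i, i \in AX (Pu u) /\ exists t, 0 < t /\ s i = t *: s j.
Proof.
move=> /and3P[Hj nzj /bPP Fj].
have P0 : bP (pospar (s j) (s j)) by apply/bPP; exists 1; rewrite ltr01 scale1r.
case: (@arg_minnP _ j (fun i : 'I_N => bP (pospar (s i) (s j))) (fun i : 'I_N => val i) P0) => i /bPP [t [tp Ei]] Hmin.
exists i; split; last by exists t.
rewrite inE; apply/andP; split.
  apply/and3P; split.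
  - by move: Hj; rewrite !inE Ei dotvZr => /eqP ->; rewrite mulr0.
  - by rewrite Ei scaler_eq0 negb_or gt_eqF.
  - apply/bPP; apply: is_face_eqT Fj; apply: vseteq_sym; rewrite Ei; exact: ray_scale.
apply/forallP => k; apply/implyP => ki; apply/negP => /bPP [t' [t'p Ek]].
have : bP (pospar (s k) (s j)).
  by apply/bPP; exists (t' * t); rewrite mulr_gt0 // Ek Ei scalerA.
by move/Hmin; rewrite leqNgt ki.
Qed.

Lemma rays_distinct (X : {set 'I_N}) i j : i \in AX X -> j \in AX X -> vseteq (ray (s i)) (ray (s j)) -> i = j.
Proof.
rewrite !inE => /andP[/and3P[_ nzi _] ci] /andP[/and3P[_ nzj _] cj] E.
have [t [t0 Ei]] : ray (s j) (s i) by apply/E; exists 1; rewrite ler01 scale1r.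
have tp : 0 < t by rewrite lt_def t0 andbT; apply: contra nzi => /eqP t_0; rewrite Ei t_0 scale0r.
have pij : pospar (s i) (s j) by exists t.
have pji : pospar (s j) (s i).
  by exists t^-1; rewrite invr_gt0 tp Ei scalerA mulVf ?gt_eqF // scale1r.
case: (ltngtP i j) => [lij|lji|/val_inj //].
  by move: cj => /forallP /(_ i) /implyP /(_ lij) /bPP.
by move: ci => /forallP /(_ j) /implyP /(_ lji) /bPP.
Qed.

Lemma gm1_rank i : s i != 0 -> \rank (gm [set i]) = 1%N.
Proof.
move=> nz.
have sub1 : (gm [set i] <= s i)%MS.
  by apply: gm_subP => j; rewrite inE => /eqP ->; exact: submx_refl.
have sub2 : (s i <= gm [set i])%MS by apply: sv_sub_gm; rewrite set11.
have := mxrankS sub1; have := mxrankS sub2; rewrite rank_rV nz => H1 H2.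
by apply/eqP; rewrite eqn_leq H1 H2.
Qed.

Lemma ray_AX (X : {set 'I_N}) i : i \in AX X -> is_ray (C X) (ray (s i)).
Proof.
rewrite inE => /andP[/and3P[_ nz /bPP F] _]; split => //.
apply: has_dim_eq; first exact: vseteq_sym (ray_cone1 i).
by have := has_dim_cone [set i]; rewrite (gm1_rank nz).
Qed.

Lemma ray_class u T : du u -> is_ray (C (Pu u)) T ->
  exists i, i \in AX (Pu u) /\ vseteq T (ray (s i)).
Proof.
move=> Du [[u' [H1 H2]] D1].
set X := Pu u.
have H1' : forall i, i \in X -> 0 <= dotv u' (s i) by move=> i Hi; apply: H1; apply: cone_gen.
set Y := X :&: Pu u'.
have EY : vseteq T (C Y) by apply: vseteq_trans H2 (cone_face H1').
have rY : \rank (gm Y) = 1%N.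
  by apply: (has_dim_uniq (has_dim_cone Y)); apply: has_dim_eq D1.
have [i /andP[Hi nz]] : exists2 i, (i \in Y) && (s i != 0) & true.
  case: (pickP (fun i => (i \in Y) && (s i != 0))) => [i Hi|H]; first by exists i.
  exfalso; have : (gm Y <= (0 : 'M[R]_(N, n)))%MS.
    apply: gm_subP => j Hj; have := H j; rewrite Hj /= => /negbFE /eqP ->.
    exact: sub0mx.
  by move/mxrankS; rewrite mxrank0 rY.
have Ei : vseteq T (ray (s i)).
  apply: vseteq_trans EY _; apply: vseteq_sym; apply: vseteq_trans (ray_cone1 i) _.
  move=> v; split.
    apply: cone_subset; by rewrite sub1set.
  apply: cone_trans => j Hj.
  have sub : (s i <= gm Y)%MS by apply: sv_sub_gm.
  have [_] := mxrank_leqif_eq sub; rewrite rank_rV nz rY eqxx => /esym /andP[_ sYi].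
  have /sub_rVP [a Ea] := submx_trans (sv_sub_gm Hj) sYi.
  apply/ray_cone1; exists a; split => //; exact: sv_mult_ge0 Ea nz.
have Hr : rayix X i.
  apply/and3P; split => //; first by move: Hi; rewrite in_setI => /andP[].
  apply/bPP; exact: (is_face_eqT Ei (ex_intro _ u' (conj H1 H2))).
have [j [Hj [t [tp Ej]]]] := canon_rep Hr.
exists j; split => //; apply: vseteq_trans Ei _; rewrite Ej; apply: vseteq_sym; exact: ray_scale.
Qed.


Lemma num_rays_card u k : du u -> num_rays (C (Pu u)) k -> k = #|AX (Pu u)|.
Proof.
move=> Du [f [Hr [Hinj Hsur]]].
have Hg : forall a : 'I_k, exists i, i \in AX (Pu u) /\ vseteq (f a) (ray (s i)).
  by move=> a; apply: ray_class (Hr a).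
pose g a := proj1_sig (constructive_indefinite_description _ (Hg a)).
have gP a : g a \in AX (Pu u) /\ vseteq (f a) (ray (s (g a))).
  exact: proj2_sig (constructive_indefinite_description _ (Hg a)).
have ginj : injective g.
  move=> a b Eab; apply: Hinj; apply: vseteq_trans (gP a).2 _.
  by rewrite Eab; apply: vseteq_sym; exact: (gP b).2.
have Hh : forall i, exists o : option 'I_k, i \in AX (Pu u) ->
    exists a, o = Some a /\ vseteq (ray (s i)) (f a).
  move=> i; case: (boolP (i \in AX (Pu u))) => Hi; last by exists None.
  have [a Ea] := Hsur _ (ray_AX Hi); exists (Some a) => _; exists a; split => //.
pose h i := proj1_sig (constructive_indefinite_description _ (Hh i)).
have hP i : i \in AX (Pu u) -> exists a, h i = Some a /\ vseteq (ray (s i)) (f a).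
  exact: proj2_sig (constructive_indefinite_description _ (Hh i)).
apply/eqP; rewrite eqn_leq; apply/andP; split.
  have <- : #|g @: [set: 'I_k]| = k by rewrite card_imset // cardsT card_ord.
  apply: subset_leq_card; apply/subsetP => i /imsetP [a _ ->]; exact: (gP a).1.
have hinj : {in AX (Pu u) &, injective h}.
  move=> i j Hi Hj Eh; have [a [Ea Fa]] := hP i Hi; have [b [Eb Fb]] := hP j Hj.
  apply: (rays_distinct Hi Hj); apply: vseteq_trans Fa _.
  move: Eh; rewrite Ea Eb => [[->]]; exact: vseteq_sym.
rewrite -(card_in_imset hinj).
have Ek : #|Some @: [set: 'I_k]| = k.
  by rewrite card_imset ?cardsT ?card_ord //; move=> a b [].
rewrite -[X in (_ <= X)%N]Ek.
apply: subset_leq_card; apply/subsetP => o /imsetP [i Hi ->].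
have [a [Ea _]] := hP i Hi; rewrite Ea; apply/imsetP; exists a => //; exact: in_setT.
Qed.

Lemma num_rays_AX u : du u -> num_rays (C (Pu u)) #|AX (Pu u)|.
Proof.
move=> Du; exists (fun a => ray (s (enum_val a))); split.
  move=> a; apply: ray_AX; exact: enum_valP.
split.
  move=> a b E; apply: enum_val_inj; exact: rays_distinct (enum_valP a) (enum_valP b) E.
move=> T HT; have [i [Hi Ei]] := ray_class Du HT.
by exists (enum_rank_in Hi i); rewrite enum_rankK_in.
Qed.

End Rays.



Section Mink.
Variables (R : realFieldType) (n : nat) (S : seq 'rV[R]_n).
Local Notation vec := 'rV[R]_n.
Local Notation N := (size S).
Local Notation dotv := (@dotv R n).
Local Notation s := (@sv _ _ S).
Local Notation C := (@cone _ _ S).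
Local Notation Pu := (@Pu _ _ S).
Local Notation gm := (@gm _ _ S).
Hypothesis SC : strongly_convex (C setT).

Lemma psum0 (D : {set 'I_N}) (c : 'I_N -> R) :
  (forall l, l \in D -> s l != 0) -> (forall l, 0 <= c l) ->
  \sum_(l in D) c l *: s l = 0 -> forall l, l \in D -> c l = 0.
Proof.
move=> nzD c0 Hs l Hl; apply/eqP; apply: contraT => cl.
have clp : 0 < c l by rewrite lt_def cl c0.
exfalso; move: (nzD l Hl) => /negP; apply; apply/eqP; apply: SC.
  by apply: cone_gen; rewrite in_setT.
move: Hs; rewrite (bigD1 l) //= => /(congr1 (fun x => (c l)^-1 *: x)).
rewrite scaler0 scalerDr scalerA mulVf // scale1r => /eqP; rewrite addr_eq0 => /eqP ->.
rewrite opprK; apply: coneZ; first by rewrite invr_ge0 c0.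
apply: cone_sum => i _; apply: coneZ => //; apply: cone_gen; exact: in_setT.
Qed.


Lemma extreme_face (X M : {set 'I_N}) j :
  M \subset X -> (forall v, C X v -> C M v) ->
  (forall l, l \in M -> s l != 0) -> j \in M -> ~ C (M :\ j) (s j) ->
  is_face (C X) (ray (s j)).
Proof.
move=> sMX CM nzM jM ndrop.
set w := s j; set wj := dotv w w.
have wjp : 0 < wj by apply: dotv_self_gt0; exact: nzM.
pose pi (x : vec) := x - (dotv w x / wj) *: w.
set D := M :\ j.
have nzD : forall l, l \in D -> s l != 0 by move=> l; rewrite in_setD1 => /andP[_]; exact: nzM.
have Pt : forall c : 'I_N -> R, (forall l, 0 <= c l) -> \sum_(l in D) c l *: pi (s l) = 0 ->
    forall l, l \in D -> c l = 0.
  move=> c c0 Hs; apply: (psum0 nzD c0).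
  set y := \sum_(l in D) c l *: s l.
  set be := \sum_(l in D) c l * (dotv w (s l) / wj).
  have Ey : y = be *: w.
    apply/eqP; rewrite -subr_eq0; apply/eqP; rewrite -[RHS]Hs /y /be.
    rewrite scaler_suml -sumrB; apply: eq_bigr => l _.
    by rewrite /pi scalerBr scalerA.
  case: (ltP 0 be) => [bep|be0].
    exfalso; apply: ndrop.
    have -> : s j = be^-1 *: y by rewrite Ey scalerA mulVf ?gt_eqF // scale1r.
    apply: coneZ; first by rewrite invr_ge0 ltW.
    by apply: cone_sum => l Hl; apply: coneZ => //; apply: cone_gen.
  apply: SC.
    by apply: cone_sum => l _; apply: coneZ => //; apply: cone_gen; exact: in_setT.
  rewrite Ey -scaleNr; apply: coneZ; first by rewrite oppr_ge0.
  by apply: cone_gen; exact: in_setT.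
have [v Hv] := gordanP Pt.
set u' := v - (dotv v w / wj) *: w.
have Eu x : dotv u' x = dotv v (pi x).
  rewrite /u' /pi dotvBl dotvBr dotvZl dotvZr; congr (_ - _).
  by rewrite mulrAC [RHS]mulrC -mulrA [dotv w x * _]mulrC dotvC.
have uj : dotv u' w = 0.
  by rewrite Eu /pi -/wj divff ?gt_eqF // scale1r subrr dotv0r.
have uD : forall l, l \in D -> 0 < dotv u' (s l) by move=> l Hl; rewrite Eu; exact: Hv.
have hM : forall i, i \in M -> 0 <= dotv u' (s i).
  move=> i Hi; case: (eqVneq i j) => [->|ij]; first by rewrite uj.
  by apply: ltW; apply: uD; rewrite in_setD1 ij.
exists u'; split.
  by move=> x /CM; apply: cone_dot_ge0.
move=> x; split.
  move=> [t [t0 ->]]; split; last by rewrite dotvZr uj mulr0.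
  by apply: coneZ => //; apply: cone_gen; apply: (subsetP sMX).
move=> [/CM HxM Hx0].
have : C (M :&: Pu u') x by apply/(cone_face hM).
move=> /cone_subset H; apply/ray_cone1; apply: H.
apply/subsetP => i; rewrite in_setI inE => /andP[Hi /eqP ui]; rewrite inE.
apply: contraT => ij; have := uD i; rewrite in_setD1 ij Hi ui ltxx.
by move=> /(_ isT).
Qed.


Local Notation du := (@du _ _ S).
Local Notation AX := (@AX _ _ S).

Lemma mink u : du u -> forall l, l \in Pu u -> (s l <= gm (AX (Pu u)))%MS.
Proof.
move=> Du; set X := Pu u.
pose good (M : {set 'I_N}) := (M \subset X) && [forall l in X, bP (C M (s l))].
have gX : good X.
  by rewrite /good subxx /=; apply/forallP => l; apply/implyP => Hl; apply/bPP; apply: cone_gen.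
case: (@arg_minnP _ X good (fun M => #|M|) gX) => M /andP[sMX /forallP gM] Hmin.
have gMl : forall l, l \in X -> C M (s l) by move=> l Hl; move: (gM l); rewrite Hl => /bPP.
have CM : forall v, C X v -> C M v by move=> v; apply: cone_trans.
have drop : forall j, j \in M -> ~ C (M :\ j) (s j).
  move=> j jM Hd.
  have : good (M :\ j).
    apply/andP; split; first by apply: subset_trans sMX; exact: subsetDl.
    apply/forallP => l; apply/implyP => Hl; apply/bPP; apply: cone_trans (gMl l Hl).
    move=> i Hi; case: (eqVneq i j) => [->//|ij]; apply: cone_gen; by rewrite in_setD1 ij.
  move/Hmin; rewrite (cardsD1 j M) jM ltnn //.
have nzM : forall l, l \in M -> s l != 0.
  move=> l lM; apply/eqP => E; apply: (drop l lM); rewrite E; exact: cone0.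
have rM : forall j, j \in M -> @rayix _ _ S X j.
  move=> j jM; apply/and3P; split; [exact: (subsetP sMX) | exact: nzM|].
  apply/bPP; exact: (extreme_face sMX CM nzM jM (drop j jM)).
move=> l Hl; apply: submx_trans (cone_sub_gm (gMl l Hl)) _.
apply: gm_subP => j jM.
have [i [Hi [t [tp Ei]]]] := canon_rep (rM j jM).
have -> : s j = t^-1 *: s i by rewrite Ei scalerA mulVf ?gt_eqF // scale1r.
by apply: scalemx_sub; apply: sv_sub_gm.
Qed.


Lemma face_of_face u T : du u -> is_face (C (Pu u)) T -> is_face (C setT) T.
Proof.
move=> Du [u' [H1 H2]].
have H1' : forall i, i \in Pu u -> 0 <= dotv u' (s i) by move=> i Hi; apply: H1; apply: cone_gen.
have [la Hla] := exists_above (fun l : 'I_N => if dotv u (s l) == 0 then 0 else - dotv u' (s l) / dotv u (s l)).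
set u'' := u' + la *: u.
have Hl : forall l, (dotv u (s l) == 0) = false -> 0 < dotv u'' (s l).
  move=> l Hl; have := Hla l; rewrite Hl.
  have up : 0 < dotv u (s l) by rewrite lt_def Hl Du.
  rewrite ltr_pdivrMr // => H; rewrite /u'' dotvDl dotvZl -subr_gt0 in H *.
  by rewrite opprK addrC in H.
have Hz : forall l, dotv u (s l) = 0 -> dotv u'' (s l) = dotv u' (s l).
  by move=> l E; rewrite /u'' dotvDl dotvZl E mulr0 addr0.
have Du'' : forall i, i \in setT -> 0 <= dotv u'' (s i).
  move=> i _; case: (eqVneq (dotv u (s i)) 0) => [E|E].
    by rewrite Hz // H1' // inE E.
  by apply: ltW; apply: Hl; apply/negbTE.
exists u''; split; first by move=> v; apply: cone_dot_ge0.
apply: vseteq_trans H2 _; apply: vseteq_trans (cone_face H1') _.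
apply: vseteq_sym; apply: vseteq_trans (cone_face Du'') _.
have -> : setT :&: Pu u'' = Pu u :&: Pu u'; last exact: vseteq_refl.
apply/setP => i; rewrite setTI !inE.
case: (eqVneq (dotv u (s i)) 0) => [E|E] /=; first by rewrite Hz.
by rewrite gt_eqF // Hl // (negbTE E).
Qed.

Lemma AX_sub (X : {set 'I_N}) : AX X \subset X.
Proof. by apply/subsetP => i; rewrite inE => /andP[/and3P[]]. Qed.

Lemma AX_face u : du u -> AX (Pu u) = AX setT :&: Pu u.
Proof.
move=> Du; apply/setP => i; rewrite in_setI.
case: (boolP (i \in Pu u)) => Hi; last first.
  by rewrite andbF; apply: contraNF Hi; apply: (subsetP (AX_sub _)).
rewrite andbT /AX !in_set /rayix Hi in_setT /=.
congr (_ && _); congr (_ && _).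
apply/bPP/bPP.
  exact: face_of_face.
move=> [u' [H1 H2]]; exists u'; split.
  by move=> v Hv; apply: H1; apply: cone_subset Hv; exact: subsetT.
move=> v; split.
  move=> Hv; split; last by case/H2: Hv.
  case: Hv => [t [t0 ->]]; apply: coneZ => //; exact: cone_gen.
by move=> [Hv Hu']; apply/H2; split => //; apply: cone_subset Hv; exact: subsetT.
Qed.



Lemma dim_face u : du u -> \rank (gm (Pu u)) = \rank (gm (AX (Pu u))).
Proof.
move=> Du; apply/eqP; rewrite eqn_leq; apply/andP; split; apply: mxrankS.
  by apply: gm_subP; apply: mink.
exact: gmS (AX_sub _).
Qed.

Lemma ns_face u m : du u ->
  (ns_is (C (Pu u)) m <-> #|AX (Pu u)| = (\rank (gm (AX (Pu u))) + m)%N).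
Proof.
move=> Du; split.
  move=> [k [d [Hk [Hd E]]]].
  rewrite -(num_rays_card SC Du Hk) E -(dim_face Du); congr (_ + _)%N.
  exact: has_dim_uniq Hd (has_dim_cone _).
move=> E; exists #|AX (Pu u)|, (\rank (gm (Pu u))); split; first exact: num_rays_AX.
by split; [exact: has_dim_cone | rewrite dim_face].
Qed.

End Mink.



Section Null.
Variables (R : realFieldType) (n : nat) (S : seq 'rV[R]_n).
Local Notation N := (size S).
Local Notation rho X := (\rank (@gm _ _ S X)).

Lemma nullity (X Y Z : {set 'I_N}) m : X \subset Z -> Y \subset Z ->
  #|Z| = (rho Z + m)%N -> #|X| = (rho X + m)%N -> #|Y| = (rho Y + m)%N ->
  #|X :&: Y| = (rho (X :&: Y) + m)%N.
Proof.
move=> sXZ sYZ hZ hX hY.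
have h1 := gm_submod X Y.
have sU : X :|: Y \subset Z by rewrite subUset sXZ sYZ.
have h2 := gm_mono sU.
have h3 := gm_mono (subsetIl X Y).
have c1 := cardsUI X Y.
have c2 := cardsID (X :|: Y) Z; rewrite (setIidPr sU) in c2.
have c3 := cardsID (X :&: Y) X; rewrite (setIidPr (subsetIl X Y)) in c3.
move/ssrnat.leP: h1 => h1; move/ssrnat.leP: h2 => h2; move/ssrnat.leP: h3 => h3.
rewrite -?plusE in h1 h2 h3 c1 c2 c3 hZ hX hY *.
lia.
Qed.
End Null.

Close Scope ring_scope.
Unset Implicit Arguments.

Theorem lemma3p2 (R : realFieldType) (n : nat) (sigma : vset R n) (m : nat) :
  rational_polyhedral sigma -> strongly_convex sigma ->
  ns_is sigma m -> (0 < m)%N ->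
  exists tau : vset R n,
    (is_face sigma tau /\ ns_is tau m /\
     (forall tau', is_face sigma tau' -> ns_is tau' m ->
        vsubset tau' tau -> vseteq tau' tau)) /\
    (forall tau'', is_face sigma tau'' -> ns_is tau'' m ->
       (forall tau', is_face sigma tau' -> ns_is tau' m ->
          vsubset tau' tau'' -> vseteq tau' tau'') ->
       vseteq tau'' tau).
Proof.
Local Open Scope ring_scope.
move=> [S [_ ES0]] Hsc Hns _.
set s := @sv _ _ S.
set Cn := @cone _ _ S.
set P := @Pu _ _ S.
have ES : vseteq sigma (Cn setT) := vseteq_trans ES0 (cone_setT S).
have SC : strongly_convex (Cn setT).
  by move=> v /ES H1 /ES H2; apply: Hsc.
have P0 : P 0 = setT by apply/setP => i; rewrite !inE dotv0l eqxx.
have du0 : du S 0 by move=> i; rewrite dotv0l.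
have face_sig : forall T, is_face sigma T <-> exists u, du S u /\ vseteq T (Cn (P u)).
  move=> T; split.
    move=> /(is_face_eqC ES) [u [H1 H2]]; exists u; split.
      by move=> i; apply: H1; apply: cone_gen; exact: in_setT.
    apply: vseteq_trans H2 _; rewrite -[P u]setTI; apply: cone_face => i _.
    by apply: H1; apply: cone_gen; exact: in_setT.
  move=> [u [Du E]]; apply: (is_face_eqC (vseteq_sym ES)).
  exists u; split; first by move=> v; apply: cone_dot_ge0 => i _; exact: Du.
  apply: vseteq_trans E _; rewrite -[P u]setTI; apply: vseteq_sym.
  by apply: cone_face => i _; exact: Du.
set A := AX (S := S) setT.
set z : 'rV[R]_n := 0.
have nsP : forall u T, du S u -> vseteq T (Cn (P u)) ->
    (ns_is T m <-> #|A :&: P u| = (\rank (gm (A :&: P u)) + m)%N).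
  move=> u T Du E; rewrite -(AX_face Du) -(ns_face SC m Du); split.
    exact: ns_is_eqC.
  exact: ns_is_eqC (vseteq_sym E).
have hA : #|A :&: P z| = (\rank (gm (A :&: P z)) + m)%N.
  apply/(nsP z sigma du0) => //; rewrite P0; exact: ES.
pose good k := bP (exists u, du S u /\ ns_is (Cn (P u)) m /\ #|P u| = k).
have exg : exists k, good k.
  exists #|P z|; apply/bPP; exists z; split => //; split => //.
  apply/(nsP z _ du0 (vseteq_refl _)); exact: hA.
case: (ex_minnP exg) => k0 /bPP [u0 [Du0 [Ns0 Ek0]]] Hmin.
set tau := Cn (P u0).
have min1 : forall tau', is_face sigma tau' -> ns_is tau' m ->
    vsubset tau' tau -> vseteq tau' tau.
  move=> tau' /face_sig [u' [Du' E']] Ns' sub.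
  have sP : P u' \subset P u0.
    apply/subsetP => i Hi; rewrite inE; apply/eqP; apply: cone_Pu_dot.
    by apply: sub; apply/E'; apply: cone_gen.
  have gk : good #|P u'|.
    apply/bPP; exists u'; split => //; split => //; exact: ns_is_eqC E' Ns'.
  have := Hmin _ gk; rewrite -Ek0 => cardle.
  have /eqP EP : P u' == P u0 by rewrite eqEcard sP cardle.
  by rewrite /tau -EP.
have Ftau : is_face sigma tau by apply/face_sig; exists u0; split.
exists tau; split; first by split.
move=> tau'' /face_sig [u2 [Du2 E2]] Ns2 min2.
set u12 := u0 + u2.
have Du12 : du S u12 by move=> i; rewrite /u12 dotvDl addr_ge0.
have P12 : P u12 = P u0 :&: P u2.
  by apply/setP => i; rewrite in_setI !inE /u12 dotvDl paddr_eq0.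
have N12 : ns_is (Cn (P u12)) m.
  apply/(nsP _ _ Du12 (vseteq_refl _)); rewrite P12.
  have -> : A :&: (P u0 :&: P u2) = (A :&: P u0) :&: (A :&: P u2) by rewrite setIACA setIid.
  apply: nullity (subsetIl A (P u0)) (subsetIl A (P u2)) _ _ _.
  - by rewrite P0 setIT in hA.
  - by apply/(nsP _ _ Du0 (vseteq_refl _)).
  - by apply/(nsP _ _ Du2 E2).
have F12 : is_face sigma (Cn (P u12)) by apply/face_sig; exists u12.
have E12a : vseteq (Cn (P u12)) tau.
  apply: min1 => // v; apply: cone_subset; rewrite P12; exact: subsetIl.
have E12b : vseteq (Cn (P u12)) tau''.
  apply: min2 => // v Hv; apply/E2; apply: cone_subset Hv; rewrite P12; exact: subsetIr.
exact: vseteq_trans (vseteq_sym E12b) E12a.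
Qed.
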